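(* If $G$ is a connected graph with at least one edge, with girth at least five and with no vertices of degree one, then $KB_e(G)\cong G$.
   Context: All graphs are finite, simple and undirected. The girth of a graph is the length of a shortest cycle (infinite if acyclic). A biclique of a graph $G$ is a maximal (with respect to inclusion) induced subgraph of $G$ that is a complete bipartite graph $K_{p,q}$ with $p,q\ge 1$. The edge-biclique graph $KB_e(G)$ is the graph with one vertex for each biclique of $G$, in which two distinct vertices are adjacent if and only if the corresponding bicliques have at least one edge in common. *)

(* Defs.v *)
From mathcomp Require Import all_boot.
Set Implicit Arguments. Unset Strict Implicit. Unset Printing Implicit Defensive.

Section Graphs.
Variable T : finType.
Implicit Types (e : rel T) (S : {set T}).

Definition simple_graph e : Prop := symmetric e /\ irreflexive e.

Definition connected_graph e : Prop := forall x y : T, connect e x y.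

Definition has_edge e : Prop := exists x y : T, e x y.

Definition degree e (x : T) : nat := #|[set y | e x y]|.

Definition has_cycle_of_length e (k : nat) : Prop :=
  exists s : seq T, [/\ size s = k, 3 <= k, uniq s & cycle e s].

(* girth (length of a shortest cycle, infinite if acyclic) is at least g *)
Definition girth_ge e (g : nat) : Prop :=
  forall k, k < g -> ~ has_cycle_of_length e k.

Definition induces_complete_bipartite e S : bool :=
  [exists A : {set T}, exists B : {set T},
    [&& A :|: B == S, [disjoint A & B], A != set0, B != set0,
        [forall a in A, forall b in B, e a b],
        [forall a in A, forall a' in A, ~~ e a a'] &
        [forall b in B, forall b' in B, ~~ e b b']]].

Definition is_biclique e S : bool :=
  induces_complete_bipartite e S &&
  [forall S' : {set T}, (S \subset S') && induces_complete_bipartite e S' ==> (S' == S)].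

Definition biclique e := {S : {set T} | is_biclique e S}.

(* two bicliques share an edge (of G, hence of both induced subgraphs) *)
Definition share_edge e S1 S2 : bool :=
  [exists x in S1 :&: S2, exists y in S1 :&: S2, e x y].

Definition KBe_adj e (B1 B2 : biclique e) : bool :=
  (B1 != B2) && share_edge e (val B1) (val B2).

End Graphs.

Definition graph_iso (T1 T2 : Type) (e1 : T1 -> T1 -> bool) (e2 : T2 -> T2 -> bool) : Prop :=
  exists f : T1 -> T2, bijective f /\ forall x y, e2 (f x) (f y) = e1 x y.

(* Main.v *)
Require Import Defs.
From mathcomp Require Import all_boot.
Set Implicit Arguments. Unset Strict Implicit. Unset Printing Implicit Defensive.

Definition Nb (T : finType) (e : rel T) (v : T) : {set T} := v |: [set y | e v y].

Lemma inNb (T : finType) (e : rel T) v x : (x \in Nb e v) = (x == v) || e v x.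
Proof. by rewrite !inE. Qed.

Lemma edge_neq (T : finType) (e : rel T) : irreflexive e -> forall x y, e x y -> x != y.
Proof. by move=> irr x y xy; apply: contraTneq xy => ->; rewrite irr. Qed.

Lemma no_tri (T : finType) (e : rel T) : irreflexive e -> girth_ge e 5 ->
  forall a b c, e a b -> e b c -> e c a -> False.
Proof.
move=> irr g a b c ab bc ca; apply: (g 3 isT); exists [:: a; b; c]; split => //.
  have nab := edge_neq irr ab; have nbc := edge_neq irr bc; have nca := edge_neq irr ca.
  by rewrite /= !inE negb_or nab eq_sym nca nbc.
by rewrite /= ab bc ca.
Qed.

Lemma no_c4 (T : finType) (e : rel T) : irreflexive e -> girth_ge e 5 ->
  forall a b c d, e a b -> e b c -> e c d -> e d a -> a != c -> b != d -> False.
Proof.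
move=> irr g a b c d ab bc cd da nac nbd; apply: (g 4 isT); exists [:: a; b; c; d]; split => //.
  have nab := edge_neq irr ab; have nbc := edge_neq irr bc; have ncd := edge_neq irr cd.
  have nda := edge_neq irr da.
  by rewrite /= !inE !negb_or nab nac eq_sym nda nbc nbd ncd.
by rewrite /= ab bc cd da.
Qed.

Lemma two_nbrs (T : finType) (e : rel T) : connected_graph e -> has_edge e ->
  (forall x : T, degree e x != 1) ->
  forall v, exists y1 y2, [/\ e v y1, e v y2 & y1 != y2].
Proof.
move=> conn [x [y xy]] deg v.
have h1 : 0 < degree e v.
  apply/card_gt0P.
  case/connectP: (conn v x) => [[|z p]] /=.
    by move=> _ xv; exists y; rewrite inE -xv.
  by case/andP => vz _ _; exists z; rewrite inE.
have h2 : 1 < degree e v by move: (deg v) h1; case: (degree e v) => [|[|n]].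
case/card_gt1P: h2 => y1 [y2 [h1' h2' n]]; exists y1, y2.
by move: h1' h2'; rewrite !inE => -> ->.
Qed.

Lemma icb_sub (T : finType) (e : rel T) : simple_graph e -> girth_ge e 5 ->
  forall S, induces_complete_bipartite e S -> exists c, S \subset Nb e c.
Proof.
move=> [sym irr] g S /existsP [A /existsP [B /and5P [hU _ hA0 hB0 /andP [hAB _]]]].
have AB : forall a b, a \in A -> b \in B -> e a b.
  by move=> a b aA bB; exact: (forall_inP (forall_inP hAB a aA) b bB).
case/set0Pn: hA0 => a aA; case/set0Pn: hB0 => b bB.
case: (boolP [forall a' in A, a' == a]) => [/forall_inP Ha | /forall_inPn [a' a'A na']].
  exists a; apply/subsetP => x; rewrite -(eqP hU) inE inNb => /orP [xA|xB].
    by rewrite Ha.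
  by rewrite AB ?orbT.
case: (boolP [forall b' in B, b' == b]) => [/forall_inP Hb | /forall_inPn [b' b'B nb']].
  exists b; apply/subsetP => x; rewrite -(eqP hU) inE inNb => /orP [xA|xB].
    by rewrite sym AB ?orbT.
  by rewrite Hb.
exfalso; apply: (no_c4 irr g (a := a) (b := b) (c := a') (d := b')).
- exact: AB.
- by rewrite sym AB.
- exact: AB.
- by rewrite sym AB.
- by rewrite eq_sym.
- by rewrite eq_sym.
Qed.

Lemma Nb_icb (T : finType) (e : rel T) : simple_graph e -> girth_ge e 5 ->
  connected_graph e -> has_edge e -> (forall x : T, degree e x != 1) ->
  forall v, induces_complete_bipartite e (Nb e v).
Proof.
move=> [sym irr] g conn he deg v.
have [y1 [y2 [vy1 vy2 _]]] := two_nbrs conn he deg v.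
apply/existsP; exists [set v]; apply/existsP; exists [set y | e v y].
apply/and5P; split => //.
- by rewrite disjoints1 inE irr.
- by apply/set0Pn; exists v; rewrite inE.
- by apply/set0Pn; exists y1; rewrite inE.
apply/and3P; split.
- by apply/forall_inP => a; rewrite inE => /eqP ->; apply/forall_inP => b; rewrite inE.
- by apply/forall_inP => a; rewrite inE => /eqP ->; apply/forall_inP => b; rewrite inE => /eqP ->; rewrite irr.
- apply/forall_inP => a; rewrite inE => va; apply/forall_inP => b; rewrite inE => vb.
  apply/negP => ab; apply: (no_tri irr g va ab); by rewrite sym.
Qed.

Lemma Nb_bic (T : finType) (e : rel T) : simple_graph e -> girth_ge e 5 ->
  connected_graph e -> has_edge e -> (forall x : T, degree e x != 1) ->
  forall v, is_biclique e (Nb e v).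
Proof.
move=> [sym irr] g conn he deg v.
rewrite /is_biclique Nb_icb //; apply/forallP => S'; apply/implyP => /andP [sub icb].
have [c Sc] := icb_sub (conj sym irr) g icb.
have vS : v \in S' by apply: (subsetP sub); rewrite inNb eqxx.
case: (eqVneq c v) => [cv | ncv].
  by rewrite eqEsubset sub andbT -cv.
exfalso.
have cv : e c v by move: (subsetP Sc v vS); rewrite inNb eq_sym (negbTE ncv).
have [y1 [y2 [vy1 vy2 n12]]] := two_nbrs conn he deg v.
have [y [vy nyc]] : exists y, e v y /\ y != c.
  case: (eqVneq y1 c) => [e1|]; last by exists y1.
  by exists y2; split => //; rewrite -e1 eq_sym.
have yS : y \in S' by apply: (subsetP sub); rewrite inNb vy orbT.
have cy : e c y by move: (subsetP Sc y yS); rewrite inNb (negbTE nyc).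
by apply: (no_tri irr g cv vy); rewrite sym.
Qed.

Lemma bic_Nb (T : finType) (e : rel T) : simple_graph e -> girth_ge e 5 ->
  connected_graph e -> has_edge e -> (forall x : T, degree e x != 1) ->
  forall S, is_biclique e S -> exists c, Nb e c = S.
Proof.
move=> sg g conn he deg S /andP [icb /forallP mx].
have [c Sc] := icb_sub sg g icb.
exists c; apply/eqP; move/implyP: (mx (Nb e c)); apply.
by rewrite Sc Nb_icb.
Qed.

Lemma Nb_inj (T : finType) (e : rel T) : simple_graph e -> girth_ge e 5 ->
  connected_graph e -> has_edge e -> (forall x : T, degree e x != 1) ->
  forall u v, Nb e u = Nb e v -> u = v.
Proof.
move=> [sym irr] g conn he deg u v E.
case: (eqVneq u v) => // nuv; exfalso.
have vu : e v u by have := inNb e v u; rewrite -E inNb eqxx (negbTE nuv) /=.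
have [y1 [y2 [uy1 uy2 n12]]] := two_nbrs conn he deg u.
have [y [uy nyv]] : exists y, e u y /\ y != v.
  case: (eqVneq y1 v) => [e1|]; last by exists y1.
  by exists y2; split => //; rewrite -e1 eq_sym.
have vy : e v y by have := inNb e u y; rewrite E inNb (negbTE nyv) uy orbT /=.
by apply: (no_tri irr g vu uy); rewrite sym.
Qed.

Lemma edge_in_Nb (T : finType) (e : rel T) : simple_graph e -> girth_ge e 5 ->
  forall w x y, x \in Nb e w -> y \in Nb e w -> e x y -> x = w \/ y = w.
Proof.
move=> [sym irr] g w x y; rewrite !inNb => /orP [/eqP->|wx]; first by left.
move=> /orP [/eqP->|wy]; first by right.
by move=> xy; exfalso; apply: (no_tri irr g wx xy); rewrite sym.
Qed.

Theorem mainTheorem6 (T : finType) (e : rel T) :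
  simple_graph e ->
  connected_graph e ->
  has_edge e ->
  girth_ge e 5 ->
  (forall x : T, degree e x != 1) ->
  graph_iso e (@KBe_adj T e).
Proof.
move=> sg conn he g deg.
have [sym irr] := sg.
case: (he) => x0 _.
pose f (v : T) : biclique e := exist _ (Nb e v) (Nb_bic sg g conn he deg v).
exists f; split.
  exists (fun B : biclique e => odflt x0 [pick c | Nb e c == val B]).
    move=> v; case: pickP => [c /eqP /= E|/(_ v)]; last by rewrite eqxx.
    exact: (Nb_inj sg g conn he deg E).
  move=> B; case: pickP => [c /eqP E|H]; first by apply: val_inj.
  have [c E] := bic_Nb sg g conn he deg (valP B).
  by move: (H c); rewrite E eqxx.
move=> u v; rewrite /KBe_adj /=.
case: (eqVneq u v) => [->|nuv]; first by rewrite eqxx irr.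
have -> : f u != f v.
  apply/negP => /eqP /(congr1 val) /= E.
  by move: nuv; rewrite (Nb_inj sg g conn he deg E) eqxx.
rewrite /=; apply/idP/idP.
  case/exists_inP => x; rewrite inE => /andP [xu xv] /exists_inP [y]; rewrite inE => /andP [yu yv] xy.
  case: (edge_in_Nb sg g xu yu xy) => [xe|ye]; case: (edge_in_Nb sg g xv yv xy) => [xe'|ye'].
  - by move: nuv; rewrite -xe -xe' eqxx.
  - by rewrite -xe -ye'.
  - by rewrite -ye -xe' sym.
  - by move: nuv; rewrite -ye -ye' eqxx.
move=> uv; apply/exists_inP; exists u; first by rewrite inE !inNb eqxx /= (sym v u) uv orbT.
apply/exists_inP; exists v => //; by rewrite inE !inNb eqxx uv orbT.
Qed.
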